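(* Let $q=2^f$ with $f$ odd, and let $q_0<q$ be a power of $2$. Then there exist at least $2(q+1)/3$ elements $u\in\mathbb{F}_q$ such that the polynomial $X^{q_0+1}+uX^{q_0}+(u+1)X+1$ has no roots in $\mathbb{F}_q$. *)

(* Defs.v *)
From mathcomp Require Import all_boot all_order all_algebra all_field.
Set Implicit Arguments. Unset Strict Implicit. Unset Printing Implicit Defensive.
Import GRing.Theory.
Local Open Scope ring_scope.

Definition P5 (F : fieldType) (q0 : nat) (u : F) : {poly F} :=
  'X^(q0.+1) + u%:P * 'X^q0 + (u + 1)%:P * 'X + 1.

(* Main.v *)
Require Import Defs.
From mathcomp Require Import all_boot all_order all_algebra all_field.
From mathcomp Require Import ring zify.
From Stdlib Require Import Lia.
Import GRing.Theory.

Section Aux.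
Local Open Scope ring_scope.
Variable F : fieldType.
Hypothesis two0 : (2%:R : F) = 0.

Lemma addxx (a : F) : a + a = 0.
Proof. by rewrite -mulr2n -mulr_natr two0 mulr0. Qed.

Lemma oppc (a : F) : - a = a.
Proof. by apply/eqP; rewrite eq_sym -subr_eq0 opprK addxx. Qed.

Lemma frob (e : nat) (a b : F) : (a + b) ^+ (2 ^ e) = a ^+ (2 ^ e) + b ^+ (2 ^ e).
Proof.
elim: e a b => [|e IH] a b; first by rewrite !expr1.
rewrite expnS mulnC !exprM IH sqrrD.
by rewrite -mulr_natr two0 mulr0 addr0.
Qed.

Lemma rootE n u (x : F) :
  root (P5 n u) x = (x * x ^+ n + u * x ^+ n + (u + 1) * x + 1 == 0).
Proof. by rewrite /root /P5 !hornerE exprS. Qed.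

Lemma sigma_root e u (x : F) : x != 0 -> root (P5 (2 ^ e) u) x ->
  root (P5 (2 ^ e) u) ((x + 1) / x).
Proof.
move=> x0; rewrite !rootE => /eqP P0.
set y := x ^+ (2 ^ e).
have y0 : y != 0 by rewrite expf_neq0.
have -> : ((x + 1) / x) ^+ (2 ^ e) = (y + 1) / y.
  by rewrite exprMn frob expr1n exprVn.
set w := (x + 1) / x.
have E : x * y * (w * ((y + 1) / y) + u * ((y + 1) / y) + (u + 1) * w + 1)
   = (x * y + u * y + (u + 1) * x + 1) + 2%:R * ((u + 1) * x * y + y).
  rewrite /w; field; by apply/andP.
rewrite P0 two0 mul0r addr0 in E.
apply/eqP; move/eqP: E; rewrite mulf_eq0 mulf_eq0 (negbTE x0) (negbTE y0) /=.
by move/eqP.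
Qed.

End Aux.

Lemma pow2mod3 f : odd f -> exists k, 2 ^ f = 3 * k + 2.
Proof.
move=> hf; have -> : f = (f./2).*2.+1 by rewrite -[f in LHS]odd_double_half hf.
elim: (f./2) => [|m [k Hk]]; first by exists 0.
exists (4 * k + 2). rewrite doubleS !expnS; rewrite !expnS in Hk. lia.
Qed.

Theorem lemma5p1 (F : finFieldType) (f e : nat)
  (hf : odd f) (hq : #|F| = 2 ^ f) (hq0 : 2 ^ e < 2 ^ f) :
  2 * (2 ^ f + 1) <=
  3 * #|[set u : F | [forall x : F, ~~ root (P5 (2 ^ e) u) x]]|.
Proof.
Local Open Scope ring_scope.
have [k Hk] := pow2mod3 f hf.
have f0 : (0 < f)%N by case: (f) hf.
have two0 : (2%:R : F) = 0.
  have := expf_card (-1 : F).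
  rewrite hq -(prednK f0) expnS exprM sqrrN expr1n => /eqP.
  rewrite -subr_eq0 opprK => /eqP.
  by move=> H; rewrite -H expr1n.

have frobF (x : F) : x ^+ (3 * k + 2) = x by rewrite -Hk -hq expf_card.
have noroot (x : F) : x * x + x + 1 != 0.
  apply/negP => /eqP H.
  have x3 : x ^+ 3 = 1.
    apply/eqP; rewrite -subr_eq0.
    have -> : x ^+ 3 - 1 = (x - 1) * (x * x + x + 1) by ring.
    by rewrite H mulr0.
  have := frobF x; rewrite exprD exprM x3 expr1n mul1r expr2 => Hx.
  move: H; rewrite Hx (@addxx _ two0) add0r; apply/eqP; exact: oner_neq0.
have sig_ne (y : F) : y != 0 -> (y + 1) / y != y.
  move=> y0; apply/negP => /eqP H.
  have H2 : y + 1 = y * y by rewrite -[y + 1](divfK y0) H.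
  move: (noroot y); rewrite -H2.
  have -> : y + 1 + y + 1 = 2%:R * (y + 1) by ring.
  by rewrite two0 mul0r eqxx.
set n := (2 ^ e)%N.
have n0 : (n == 0)%N = false by rewrite /n eqn0Ngt expn_gt0.
pose phi (x : F) := (x * x ^+ n + x + 1) / (x ^+ n + x).
have rootphi (u x : F) : root (P5 n u) x -> phi x = u.
  rewrite rootE => /eqP P0.
  set y := x ^+ n in P0 *.
  have yx : y + x != 0.
    apply/negP => /eqP H.
    have Hy : y = x by rewrite -(@oppc _ two0 x); apply/eqP; rewrite -subr_eq0 opprK H.
    move: P0; rewrite Hy.
    have -> : x * x + u * x + (u + 1) * x + 1 = (x * x + x + 1) + 2%:R * (u * x) by ring.
    by rewrite two0 mul0r addr0 => /eqP; rewrite (negbTE (noroot x)).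
  rewrite /phi -/y; apply/eqP; rewrite eq_sym -(can_eq (mulfK yx)) divfK //.
  rewrite -subr_eq0.
  have -> : u * (y + x) - (x * y + x + 1)
     = (x * y + u * y + (u + 1) * x + 1) - 2%:R * (x * y + x + 1) by ring.
  by rewrite P0 two0; apply/eqP; ring.
have root_ne0 (u x : F) : root (P5 n u) x -> x != 0.
  apply: contraTneq => ->; rewrite rootE expr0n n0 !mulr0 !add0r; exact: oner_neq0.
have root_ne1 (u x : F) : root (P5 n u) x -> x + 1 != 0.
  move=> hr; apply/negP => /eqP H.
  have x1 : x = 1.
    apply/eqP; rewrite -subr_eq0 (_ : x - 1 = (x + 1) - 2%:R); last by ring.
    by rewrite H two0 subrr.
  move: hr; rewrite rootE x1 expr1n !mulr1.
  have -> : (1 : F) + u + (u + 1) + 1 = 1 + 2%:R * (u + 1) by ring.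
  by rewrite two0 mul0r addr0 oner_eq0.
set G := [set u : F | _].
have HB : (3 * #|~: G| <= #|F|)%N.
  have -> : #|F| = (\sum_(u : F) \sum_(x | phi x == u) 1)%N.
    rewrite -[LHS]sum1_card (partition_big phi xpredT) //=.
  rewrite (bigID (fun u => u \in ~: G)) /= -[X in (X <= _)%N]addn0.
  apply: leq_add => //.
  rewrite -sum1_card big_distrr /=.
  apply: leq_sum => u; rewrite in_setC in_set negb_forall => /existsP [x].
  rewrite negbK /n => hr.
  have x0 := root_ne0 _ _ hr; have x1 := root_ne1 _ _ hr.
  set w := (x + 1) / x.
  have hw : root (P5 n u) w by apply: sigma_root.
  have w0 : w != 0 by rewrite /w mulf_neq0 // invr_neq0.
  set w' := (w + 1) / w.
  have hw' : root (P5 n u) w' by apply: sigma_root.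
  have xw : x != w by rewrite eq_sym sig_ne.
  have ww' : w != w' by rewrite eq_sym sig_ne.
  have xw' : x != w'.
    apply/negP => /eqP H.
    have H1 : w + 1 = x * w by rewrite -[w + 1](divfK w0) -/w' -H.
    have H2 : x * w = x + 1 by rewrite /w mulrC divfK.
    move: xw; rewrite eq_sym; apply/negP/negPn.
    by rewrite -(addIr 1 (esym (etrans H1 H2))) eqxx.
  rewrite muln1 sum1_card.
  have <- : #|x |: [set w; w']| = 3%N.
    by rewrite cardsU1 cards2 in_set2 negb_or xw xw' ww'.
  apply: subset_leq_card; apply/subsetP => z.
  rewrite !inE => /orP [/eqP ->|/orP [/eqP ->|/eqP ->]]; exact/eqP/rootphi.
have := cardsC G; rewrite hq Hk => HC.
rewrite hq Hk in HB; lia.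
Qed.
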